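(* Consider the protocol \textsf{Contagion} (described in the context) run on top of an instance $pcb$ of probabilistic consistent broadcast. If $pcb$ satisfies $\epsilon_v^{pcb}$-total validity, then \textsf{Contagion} satisfies $\epsilon_v$-validity with $$\epsilon_v\le \epsilon_v^{pcb}+\left(1-\epsilon_v^{pcb}\right)\epsilon_o,\qquad \epsilon_o=\sum_{\bar F=D-\hat D+1}^{D}\binom{D}{\bar F}f^{\bar F}(1-f)^{D-\bar F}.$$
   Context: System model: a fixed set $\Pi$ of $N$ processes, a fraction $f$ of which are Byzantine (arbitrary behaviour, controlled by a single colluding static adversary that also controls message scheduling), and $C=(1-f)N$ correct. The system is asynchronous with reliable authenticated point-to-point links (messages between correct processes are eventually delivered). Signatures cannot be forged. Each correct process has a private independent unbiased randomness source and an oracle returning uniformly random processes of $\Pi$. A designated sender $\sigma$ broadcasts one message. Probabilistic consistent broadcast ($pcb$): $\sigma$ may broadcast a message; correct processes deliver at most one message; if $\sigma$ is correct, delivered messages were broadcast by $\sigma$; $pcb$ satisfies $\epsilon$-total validity if, whenever $\sigma$ is correct and broadcasts $m$, with probability at least $1-\epsilon$ every correct process eventually delivers $m$. \textsf{Contagion} (parameters: ready sample size $R$, contagion threshold $\hat R$, delivery sample size $D$, delivery threshold $\hat D$): upon initialization each correct process draws a ready sample of $R$ processes and a delivery sample of $D$ processes, each entry drawn independently and uniformly from $\Pi$ (with replacement), and sends ReadySubscribe to each; it records the processes from which it receives ReadySubscribe in a subscription set (and sends to each new subscriber a Ready message for every pair it is already ready for). To broadcast $m$, $\sigma$ broadcasts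 $(m,\mathrm{sign}_\sigma(m))$ via $pcb$. Upon $pcb$-delivering a correctly signed pair, a correct process becomes ready for it and sends Ready for that pair to all its subscribers. Correct processes accept Ready messages only with a valid signature of $\sigma$, and record them separately for senders in their ready sample and in their delivery sample. When at least $\hat R$ members of its ready sample have sent Ready for a pair, a correct process becomes ready for it and sends Ready for it to its subscribers (a process may be ready for several pairs). A correct process delivers the message of the first pair for which at least $\hat D$ members of its delivery sample have sent Ready, and delivers at most once. $\epsilon$-validity: if $\sigma$ is correct and broadcasts $m$, then $\sigma$ eventually delivers $m$ with probability at least $1-\epsilon$. *)

(* Defs.v *)
From HB Require Import structures.
From mathcomp Require Import all_boot all_order all_algebra.
From mathcomp Require Import all_classical all_reals all_analysis.
Import Order.TTheory GRing.Theory Num.Theory.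

(* Signatures of the sender sigma are symbolic: a pair (m', s) is correctly  *)
(* signed iff s = Some m'.  Unforgeability: Byzantine processes can only     *)
(* emit correctly signed pairs for the message m actually broadcast by the   *)
(* (correct) sender.                                                          *)
(* Protocol messages: None = ReadySubscribe, Some x = Ready x.               *)

Definition spair (Msg : eqType) : eqType := (Msg * option Msg)%type.
Definition sign {Msg : eqType} (mm : Msg) : option Msg := Some mm.
Definition valid_pair {Msg : eqType} (x : spair Msg) : bool := x.2 == Some x.1.
Definition cmsg (Msg : eqType) : eqType := option (spair Msg).

(* the random samples of every process: (ready sample, delivery sample),   *)
(* each entry drawn independently uniformly from Pi, with replacement       *)
Definition samples_t (N R D : nat) : finType :=
  {ffun 'I_N -> {ffun 'I_R -> 'I_N} * {ffun 'I_D -> 'I_N}}.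

Record pstate (N : nat) (Msg : eqType) := PState {
  subs : seq 'I_N;
  readyfor : seq (spair Msg);
  got : seq ('I_N * spair Msg);       (* accepted Ready messages (sender, pair) *)
  pcbd : bool;
  dlv : option Msg }.

Record gstate (N : nat) (Msg : eqType) := GState {
  procs : 'I_N -> pstate N Msg;
  pending : seq ('I_N * 'I_N * cmsg Msg) }.  (* in-transit (src, dst, msg) *)

(* adversary-scheduled events *)
Inductive cevent (N : nat) (Msg : eqType) :=
| EDeliver of 'I_N & 'I_N & cmsg Msg  (* network delivers pending msg src->dst *)
| EByz of 'I_N & 'I_N & cmsg Msg      (* Byzantine src sends msg to correct dst *)
| EPcb of 'I_N & spair Msg            (* pcb delivers a pair at a process *)
| ENop.
Arguments ENop {N Msg}.
Arguments EDeliver {N Msg}.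
Arguments EByz {N Msg}.
Arguments EPcb {N Msg}.
Arguments PState {N Msg}.
Arguments GState {N Msg}.
Arguments subs {N Msg}.
Arguments readyfor {N Msg}.
Arguments got {N Msg}.
Arguments pcbd {N Msg}.
Arguments dlv {N Msg}.
Arguments procs {N Msg}.
Arguments pending {N Msg}.

Section Contagion.
Variables (N R D Rh Dh : nat) (Msg : eqType) (Byz : {set 'I_N}) (m : Msg)
  (s : samples_t N R D).

Local Notation pst := (pstate N Msg).
Local Notation msgs := (seq ('I_N * 'I_N * cmsg Msg)).

Definition init_pstate : pst := PState [::] [::] [::] false None.

(* messages to Byzantine processes are handed to the adversary (dropped) *)
Definition send_to (p : 'I_N) (dsts : seq 'I_N) (c : cmsg Msg) : msgs :=
  [seq (p, q, c) | q <- dsts & q \notin Byz].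

Definition countR (p : 'I_N) (st : pst) (x : spair Msg) : nat :=
  #|[set i : 'I_R | ((s p).1 i, x) \in got st]|.
Definition countD (p : 'I_N) (st : pst) (x : spair Msg) : nat :=
  #|[set i : 'I_D | ((s p).2 i, x) \in got st]|.

Definition become_ready (p : 'I_N) (st : pst) (x : spair Msg) : pst * msgs :=
  if x \in readyfor st then (st, [::])
  else (PState (subs st) (x :: readyfor st) (got st) (pcbd st) (dlv st),
        send_to p (subs st) (Some x)).

(* correct process p receives c from q *)
Definition recv (p q : 'I_N) (c : cmsg Msg) (st : pst) : pst * msgs :=
  match c with
  | None =>
      if q \in subs st then (st, [::])
      else (PState (q :: subs st) (readyfor st) (got st) (pcbd st) (dlv st),
            [seq (p, q, Some x) | x <- readyfor st & q \notin Byz])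
  | Some x =>
      if ~~ valid_pair x then (st, [::]) else
      let st1 := PState (subs st) (readyfor st) ((q, x) :: got st)
                        (pcbd st) (dlv st) in
      let r := if Rh <= countR p st1 x then become_ready p st1 x
               else (st1, [::]) in
      let st2 := r.1 in
      let st3 := if (dlv st2 == None) && (Dh <= countD p st2 x)
                 then PState (subs st2) (readyfor st2) (got st2) (pcbd st2)
                             (Some x.1)
                 else st2 in
      (st3, r.2)
  end.

Definition pcb_deliver (p : 'I_N) (x : spair Msg) (st : pst) : pst * msgs :=
  let st1 := PState (subs st) (readyfor st) (got st) true (dlv st) in
  if valid_pair x then become_ready p st1 x else (st1, [::]).

Definition upd (f : 'I_N -> pst) (b : 'I_N) (v : pst) : 'I_N -> pst :=
  fun q => if q == b then v else f q.

Definition init_state : gstate N Msg :=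
  GState (fun _ => init_pstate)
    (flatten [seq send_to p ([seq (s p).1 i | i <- enum 'I_R]
                              ++ [seq (s p).2 i | i <- enum 'I_D]) None
             | p <- enum 'I_N & p \notin Byz]).

Definition legal (st : gstate N Msg) (e : cevent N Msg) : bool :=
  match e with
  | EDeliver a b c => (a, b, c) \in pending st
  | EByz a b c =>
      [&& a \in Byz, b \notin Byz &
          match c with Some x => valid_pair x ==> (x.1 == m) | None => true end]
  | EPcb p x => [&& p \notin Byz, ~~ pcbd (procs st p) & x == (m, sign m)]
  | ENop => true
  end.

Definition step (st : gstate N Msg) (e : cevent N Msg) : gstate N Msg :=
  match e with
  | EDeliver a b c =>
      let r := recv b a c (procs st b) in
      GState (upd (procs st) b r.1) (rem (a, b, c) (pending st) ++ r.2)
  | EByz a b c =>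
      let r := recv b a c (procs st b) in
      GState (upd (procs st) b r.1) (pending st ++ r.2)
  | EPcb p x =>
      let r := pcb_deliver p x (procs st p) in
      GState (upd (procs st) p r.1) (pending st ++ r.2)
  | ENop => st
  end.

Fixpoint state_at (e : nat -> cevent N Msg) (n : nat) : gstate N Msg :=
  match n with 0 => init_state | n'.+1 => step (state_at e n') (e n') end.

(* an admissible (legal, fair) execution: reliable links *)
Definition admissible (e : nat -> cevent N Msg) : Prop :=
  (forall n, legal (state_at e n) (e n)) /\
  (forall n k, k \in pending (state_at e n) ->
     exists2 n', n <= n' & e n' = EDeliver k.1.1 k.1.2 k.2).

(* pcb total validity event: every correct process eventually pcb-delivers m *)
Definition pcb_all (e : nat -> cevent N Msg) : Prop :=
  forall p, p \notin Byz -> exists n, e n = EPcb p (m, sign m).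

Definition delivers (e : nat -> cevent N Msg) (p : 'I_N) (mm : Msg) : Prop :=
  exists n, dlv (procs (state_at e n) p) = Some mm.

End Contagion.

(* probability of an event over (uniform samples) x (pcb randomness, law P) *)
Definition joint_prob (Rr : realType) (d : measure_display)
  (Omega : measurableType d) (P : probability Omega Rr) (T : finType)
  (E : T -> set Omega) : \bar Rr :=
  (((#|T|%:R : Rr)^-1)%:E * \sum_(t : T) P (E t))%E.

Definition eps_o (Rr : realType) (f : Rr) (D Dh : nat) : Rr :=
  (\sum_(D - Dh + 1 <= Fb < D.+1) 'C(D, Fb)%:R * f ^+ Fb * (1 - f) ^+ (D - Fb))%R.

(* Main.v *)
Require Import Defs.
From HB Require Import structures.
From mathcomp Require Import all_boot all_order all_algebra.
From mathcomp Require Import all_classical all_reals all_analysis.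
Import Order.TTheory GRing.Theory Num.Theory.
From mathcomp Require Import ring lra zify.

Set Implicit Arguments. Unset Strict Implicit. Unset Printing Implicit Defensive.
Section Proto.
Variables (N R D Rh Dh : nat) (Msg : eqType) (Byz : {set 'I_N}) (m : Msg)
  (s : samples_t N R D).

Local Notation pst := (pstate N Msg).
Local Notation recv := (recv N R D Rh Dh Msg Byz s).
Local Notation pcb_deliver := (pcb_deliver N Msg Byz).
Local Notation countD := (countD N R D Msg s).
Local Notation msgs := (seq ('I_N * 'I_N * cmsg Msg)).
Local Notation become_ready := (become_ready N Msg Byz).

Definition le_ps (a b : pst) : Prop :=
  [/\ {subset subs a <= subs b}, {subset readyfor a <= readyfor b},
      {subset got a <= got b} & (dlv a != None -> dlv b = dlv a)].

Lemma le_ps_refl a : le_ps a a.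
Proof. by split. Qed.

Lemma le_ps_trans a b c : le_ps a b -> le_ps b c -> le_ps a c.
Proof.
case=> h1 h2 h3 h4 [k1 k2 k3 k4]; split.
- by move=> y /h1 /k1.
- by move=> y /h2 /k2.
- by move=> y /h3 /k3.
by move=> ha; rewrite k4 h4 ?ha.
Qed.

Lemma br_le p st x : le_ps st (become_ready p st x).1.
Proof.
rewrite /become_ready; case: ifP => _ //=; first exact: le_ps_refl.
by split => //= y yi; rewrite inE yi orbT.
Qed.

Lemma recv_le p q c st : le_ps st (recv p q c st).1.
Proof.
rewrite /recv; case: c => [x|] /=.
  case: ifP => _ /=; first exact: le_ps_refl.
  set st1 := PState _ _ _ _ _.
  have h1 : le_ps st st1 by split => //= y yi; rewrite inE yi orbT.
  set r := (if Rh <= _ then _ else _).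
  have h2 : le_ps st1 r.1.
    by rewrite /r; case: ifP => _; [exact: br_le| exact: le_ps_refl].
  rewrite /=. apply: (le_ps_trans h1); apply: (le_ps_trans h2).
  case: ifP => [/andP[/eqP hn _]|_]; last exact: le_ps_refl.
  by split => //= ; rewrite hn.
case: ifP => _ /=; first exact: le_ps_refl.
by split => //= y yi; rewrite inE yi orbT.
Qed.

Lemma pcb_le p x st : le_ps st (pcb_deliver p x st).1.
Proof.
rewrite /pcb_deliver; set st1 := PState _ _ _ _ _.
have h1 : le_ps st st1 by split.
case: ifP => _; last exact: h1.
exact: le_ps_trans h1 (br_le _ _ _).
Qed.


Lemma br_shape p st x :
  (become_ready p st x = (st, [::]) /\ x \in readyfor st) \/
  (x \notin readyfor st /\ become_ready p st x =
    (PState (subs st) (x :: readyfor st) (got st) (pcbd st) (dlv st),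
     send_to N Msg Byz p (subs st) (Some x))).
Proof. by rewrite /become_ready; case: ifP => h; [left|right; split=> //; rewrite h]. Qed.

Lemma countD_got p a b y : got a = got b -> countD p a y = countD p b y.
Proof. by rewrite /countD => ->. Qed.

Lemma recv_some_shape p q x st : valid_pair x ->
  let r := recv p q (Some x) st in
  let st1 := PState (subs st) (readyfor st) ((q, x) :: got st) (pcbd st) (dlv st) in
  [/\ subs r.1 = subs st, got r.1 = (q, x) :: got st,
      (readyfor r.1 = readyfor st /\ r.2 = [::]) \/
      [/\ x \notin readyfor st, readyfor r.1 = x :: readyfor st &
          r.2 = send_to N Msg Byz p (subs st) (Some x)] &
      dlv r.1 = if (dlv st == None) && (Dh <= countD p st1 x) then Some x.1 else dlv st].
Proof.
move=> vx r st1; rewrite /r /recv vx /= -/st1.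
set r2 := (if Rh <= _ then _ else _).
have [h1 h2 h3 h4] : [/\ subs r2.1 = subs st, got r2.1 = (q, x) :: got st,
      (readyfor r2.1 = readyfor st /\ r2.2 = [::]) \/
      [/\ x \notin readyfor st, readyfor r2.1 = x :: readyfor st &
          r2.2 = send_to N Msg Byz p (subs st) (Some x)] &
      dlv r2.1 = dlv st].
  rewrite /r2; case: (Rh <= _); last by split => //; left.
  case: (br_shape p st1 x) => [[-> xi]|[xn ->]] /=; split => //; [left|right] => //.
have cE : countD p r2.1 x = countD p st1 x by apply: countD_got.
clearbody r2; rewrite cE h4.
by case: ifP => _ /=; split.
Qed.

Lemma recv_ready p q c st y : y \in readyfor (recv p q c st).1 ->
  y \in readyfor st \/ (c = Some y /\ valid_pair y).
Proof.
case: c => [x|]; last by rewrite /recv; case: ifP => //= _ ->; left.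
case vx: (valid_pair x); last by rewrite /recv vx /= => ->; left.
have [_ _ [[-> _]|[_ -> _]] _] := recv_some_shape p q st vx; first by left.
rewrite inE => /orP[/eqP ->|->]; last by left.
by right.
Qed.

Lemma recv_out p q c st a b c' : (a, b, c') \in (recv p q c st).2 ->
  exists2 y, c' = Some y & y \in readyfor (recv p q c st).1.
Proof.
case: c => [x|]; last first.
  rewrite /recv; case: ifP => //= _.
  by case/mapP => y; rewrite mem_filter => /andP[_ yi] [_ _ ->]; exists y.
case vx: (valid_pair x); last by rewrite /recv vx.
have [_ _ [[_ ->]|[_ -> ->]] _] := recv_some_shape p q st vx; first by [].
by case/mapP => y; rewrite mem_filter => /andP[_ yi] [_ _ ->]; exists x; rewrite ?inE ?eqxx.
Qed.

Lemma recv_subsready p q c st r y : r \notin Byz ->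
  y \in readyfor (recv p q c st).1 -> r \in subs (recv p q c st).1 ->
  (y \in readyfor st /\ r \in subs st) \/ (p, r, Some y) \in (recv p q c st).2.
Proof.
move=> rB; case: c => [x|]; last first.
  rewrite /recv; case: ifP => /= _; first by move=> *; left.
  move=> yi; rewrite inE => /orP[/eqP rq|rs]; last by left.
  right; subst r; apply/mapP; exists y => //; by rewrite mem_filter rB.
case vx: (valid_pair x); last by rewrite /recv vx /= => *; left.
have [-> _ [[-> _]|[_ -> ->]] _] := recv_some_shape p q st vx; first by move=> *; left.
rewrite inE => /orP[/eqP ->|yi] rs; last by left.
right; apply/mapP; exists r => //; by rewrite mem_filter rB.
Qed.

Lemma recv_dlv p q c st : dlv (recv p q c st).1 = dlv st \/
  exists x, [/\ c = Some x, valid_pair x & dlv (recv p q c st).1 = Some x.1].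
Proof.
case: c => [x|]; last by rewrite /recv; case: ifP => /= _; left.
case vx: (valid_pair x); last by rewrite /recv vx /=; left.
have [_ _ _ ->] := recv_some_shape p q st vx.
by case: ifP => _; [right; exists x|left].
Qed.

Lemma recv_got p q x st : valid_pair x -> (q, x) \in got (recv p q (Some x) st).1.
Proof.
by move=> vx; have [_ -> _ _] := recv_some_shape p q st vx; rewrite inE eqxx.
Qed.

Lemma recv_subs p q st : q \in subs (recv p q None st).1.
Proof. by rewrite /recv; case: ifP => //= _; rewrite inE eqxx. Qed.

Lemma recv_D p q c st :
  (forall y, Dh <= countD p st y -> dlv st != None) ->
  (forall y, Dh <= countD p (recv p q c st).1 y -> dlv (recv p q c st).1 != None).
Proof.
move=> H y.
case: c => [x|]; last by rewrite /recv; case: ifP => /= _; [apply: H|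
  rewrite (@countD_got _ _ st) //; apply: H].
case vx: (valid_pair x); last by rewrite /recv vx /=; apply: H.
have [_ gr _ ->] := recv_some_shape p q st vx.
case: ifP => [//|/negbT]; rewrite negb_and => /orP[//|hx] hy; apply: H.
have yx : y != x.
  apply: contraNneq hx => yx; subst y; move: hy.
  by rewrite (@countD_got _ _ (PState (subs st) (readyfor st) ((q, x) :: got st) (pcbd st) (dlv st))).
move: hy; rewrite /countD gr; congr (_ <= _); apply: eq_card => i.
by rewrite !inE /= xpair_eqE (negbTE yx) andbF.
Qed.


Lemma pcb_shape p x st :
  let r := pcb_deliver p x st in
  [/\ subs r.1 = subs st, got r.1 = got st, dlv r.1 = dlv st,
      (valid_pair x -> x \in readyfor r.1) &
      (readyfor r.1 = readyfor st /\ r.2 = [::]) \/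
      [/\ x \notin readyfor st, readyfor r.1 = x :: readyfor st &
          r.2 = send_to N Msg Byz p (subs st) (Some x)]].
Proof.
rewrite /pcb_deliver; set st1 := PState _ _ _ _ _.
case: ifP => vx; last by split => //; left.
case: (br_shape p st1 x) => [[-> xi]|[xn ->]] /=; split => //; first by left.
  by rewrite inE eqxx.
by right.
Qed.

Lemma pcb_ready p x st y : y \in readyfor (pcb_deliver p x st).1 ->
  y \in readyfor st \/ y = x.
Proof.
have [_ _ _ _ [[-> _]|[_ -> _]]] := pcb_shape p x st; first by left.
by rewrite inE => /orP[/eqP->|->]; [right|left].
Qed.

Lemma pcb_out p x st a b c' : (a, b, c') \in (pcb_deliver p x st).2 ->
  exists2 y, c' = Some y & y \in readyfor (pcb_deliver p x st).1.
Proof.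
have [_ _ _ _ [[_ ->]|[_ -> ->]]] := pcb_shape p x st; first by [].
by case/mapP => y; rewrite mem_filter => /andP[_ yi] [_ _ ->]; exists x; rewrite ?inE ?eqxx.
Qed.

Lemma pcb_subsready p x st r y : r \notin Byz ->
  y \in readyfor (pcb_deliver p x st).1 -> r \in subs (pcb_deliver p x st).1 ->
  (y \in readyfor st /\ r \in subs st) \/ (p, r, Some y) \in (pcb_deliver p x st).2.
Proof.
move=> rB.
have [-> _ _ _ [[-> _]|[_ -> ->]]] := pcb_shape p x st; first by move=> *; left.
rewrite inE => /orP[/eqP ->|yi] rs; last by left.
right; apply/mapP; exists r => //; by rewrite mem_filter rB.
Qed.


Local Notation gst := (gstate N Msg).
Local Notation upd := (upd N Msg).
Definition x0 : spair Msg := (m, Some m).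

Definition Inv (g : gst) : Prop :=
 [/\ forall p y, y \in readyfor (procs g p) -> y = x0,
     forall a b y, (a, b, Some y) \in pending g -> y = x0,
     forall p z, dlv (procs g p) = Some z -> z = m,
     forall p y, Dh <= countD p (procs g p) y -> dlv (procs g p) != None &
     forall q r y, q \notin Byz -> r \notin Byz -> y \in readyfor (procs g q) ->
       r \in subs (procs g q) -> (q, r, Some y) \in pending g \/ (q, y) \in got (procs g r)].

Lemma updE (pr : 'I_N -> pst) b v z : upd pr b v z = if z == b then v else pr z.
Proof. by []. Qed.

Lemma le_upd (pr : 'I_N -> pst) b v z : le_ps (pr b) v -> le_ps (pr z) (upd pr b v z).
Proof. by rewrite updE; case: eqP => [->|_] // _; exact: le_ps_refl. Qed.

Lemma Inv_recv g a b c P' :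
  Inv g ->
  (forall y, c = Some y -> valid_pair y -> y = x0) ->
  {subset P' <= pending g} ->
  (forall k, k \in pending g -> k \in P' \/ k = (a, b, c)) ->
  let r := recv b a c (procs g b) in
  Inv (GState (upd (procs g) b r.1) (P' ++ r.2)).
Proof.
move=> [IA IB IC ID IE] Cg sP hP r.
have IA' : forall p y, y \in readyfor (upd (procs g) b r.1 p) -> y = x0.
  move=> p y; rewrite updE; case: eqP => [_|_]; last exact: IA.
  case/recv_ready => [/IA//|[cy vy]]; exact: Cg cy vy.
split => //=.
- move=> a' b' y; rewrite mem_cat => /orP[/sP/IB//|].
  case/recv_out => y' [<-] yi; apply: (IA' b); by rewrite updE eqxx.
- move=> p z; rewrite updE; case: eqP => [_|_]; last exact: IC.
  case: (recv_dlv b a c (procs g b)) => [->|[x [cx vx ->]] [<-]]; first exact: IC.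
  by rewrite (Cg x cx vx).
- move=> p y; rewrite updE; case: eqP => [->|_]; last exact: ID.
  by apply: recv_D; apply: ID.
move=> q r' y qB rB.
have hle : forall z, le_ps (procs g z) (upd (procs g) b r.1 z).
  move=> z; apply: le_upd; exact: recv_le.
move=> yi rs.
have [[yo ro]|] : (y \in readyfor (procs g q) /\ r' \in subs (procs g q)) \/
                 (q, r', Some y) \in P' ++ r.2.
  move: yi rs; rewrite !updE; case: eqP => [->|_]; last by left.
  move=> yi rs; case: (recv_subsready rB yi rs) => [h|h]; first by left.
  by right; rewrite mem_cat h orbT.
- case: (IE q r' y qB rB yo ro) => [kp|kg].
  + case: (hP _ kp) => [kP|[qa rb cy]]; first by left; rewrite mem_cat kP.
    right; rewrite /r -qa -rb -cy updE eqxx; apply: recv_got.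
    by rewrite (IB _ _ _ kp) /valid_pair eqxx.
  + right; by case: (hle r') => _ _ /(_ _ kg).
- by left.
Qed.

Lemma Inv_pcb g p :
  Inv g ->
  let r := pcb_deliver p x0 (procs g p) in
  Inv (GState (upd (procs g) p r.1) (pending g ++ r.2)).
Proof.
move=> [IA IB IC ID IE] r.
have [sE gE dE _ _] := pcb_shape p x0 (procs g p).
have IA' : forall z y, y \in readyfor (upd (procs g) p r.1 z) -> y = x0.
  move=> z y; rewrite updE; case: eqP => [_|_]; last exact: IA.
  by case/pcb_ready => [/IA//|->].
split => //=.
- move=> a' b' y; rewrite mem_cat => /orP[/IB//|].
  case/pcb_out => y' [<-] yi; apply: (IA' p); by rewrite updE eqxx.
- move=> z w; rewrite updE; case: eqP => [_|_]; last exact: IC.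
  rewrite /r dE; exact: IC.
- move=> z y; rewrite updE; case: eqP => [->|_]; last exact: ID.
  rewrite /r dE (@countD_got _ _ (procs g p)) //; exact: ID.
move=> q r' y qB rB.
have hle : forall z, le_ps (procs g z) (upd (procs g) p r.1 z).
  move=> z; apply: le_upd; exact: pcb_le.
move=> yi rs.
have [[yo ro]|] : (y \in readyfor (procs g q) /\ r' \in subs (procs g q)) \/
                 (q, r', Some y) \in pending g ++ r.2.
  move: yi rs; rewrite !updE; case: eqP => [->|_]; last by left.
  move=> yi rs; case: (pcb_subsready rB yi rs) => [h|h]; first by left.
  by right; rewrite mem_cat h orbT.
- case: (IE q r' y qB rB yo ro) => [kp|kg].
  + by left; rewrite mem_cat kp.
  + right; by case: (hle r') => _ _ /(_ _ kg).
- by left.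
Qed.

Local Notation init_state := (init_state N R D Msg Byz s).
Local Notation step := (step N R D Rh Dh Msg Byz s).
Local Notation legal := (legal N Msg Byz m).
Local Notation state_at := (state_at N R D Rh Dh Msg Byz s).

Lemma Inv_init : 0 < Dh -> Inv init_state.
Proof.
move=> Dh0; split => //=.
- move=> a b y /flattenP [l /mapP [p _ ->]] /mapP [q _ [_ _]] //.
- move=> p y; rewrite /countD /=.
  suff -> : [set i | ((s p).2 i, y) \in [::]] = finset.set0 by rewrite cards0 leqNgt Dh0.
  by apply/setP => i; rewrite !inE.
Qed.

Lemma Inv_step g e : Inv g -> legal g e -> Inv (step g e).
Proof.
move=> I; have [IA IB IC ID IE] := I.
case: e => [a b c|a b c|p x|] /= L.
- apply: Inv_recv => //.
  + by move=> y cy _; subst c; exact: IB L.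
  + by move=> k /mem_rem.
  + move=> k kp; case: (eqVneq k (a, b, c)) => [->|kn]; first by right.
    by left; apply: rem_mem.
- apply: Inv_recv => //; last by move=> k kp; left.
  move=> y cy vy; subst c; case/and3P: L => _ _ /implyP /(_ vy) /eqP y1.
  move: vy; rewrite /valid_pair /x0; case: y y1 => y1 y2 /= -> /eqP -> //.
- case/and3P: L => _ _ /eqP ->; exact: Inv_pcb.
- by [].
Qed.

Lemma Inv_all e : 0 < Dh -> (forall n, legal (state_at e n) (e n)) ->
  forall n, Inv (state_at e n).
Proof.
move=> Dh0 L; elim=> [|n IH] /=; first exact: Inv_init.
exact: Inv_step.
Qed.

Lemma step_le g e p : le_ps (procs g p) (procs (step g e) p).
Proof.
case: e => [a b c|a b c|q x|] /=; try (apply: le_upd; first [exact: recv_le|exact: pcb_le]).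
exact: le_ps_refl.
Qed.

Lemma state_le e n n' p : n <= n' ->
  le_ps (procs (state_at e n) p) (procs (state_at e n') p).
Proof.
move/subnK => <-; elim: (n' - n) => [|k IH]; first exact: le_ps_refl.
rewrite addSn; apply: le_ps_trans IH _; exact: step_le.
Qed.

Lemma exists_common (I : eqType) (P : I -> nat -> Prop) (l : seq I) :
  (forall i n n', n <= n' -> P i n -> P i n') ->
  (forall i, i \in l -> exists n, P i n) -> exists n, forall i, i \in l -> P i n.
Proof.
move=> mono; elim: l => [|a l IH] H; first by exists 0.
have [na Ha] := H a (mem_head _ _).
have [nl Hl] : exists n, forall i, i \in l -> P i n.
  by apply: IH => i il; apply: H; rewrite inE il orbT.
exists (maxn na nl) => i; rewrite inE => /orP[/eqP->|il].
  exact: mono (leq_maxl _ _) Ha.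
exact: mono (leq_maxr _ _) (Hl i il).
Qed.

Lemma main_det e sigma : 0 < Dh ->
  admissible N R D Rh Dh Msg Byz m s e -> pcb_all N Msg Byz m e -> sigma \notin Byz ->
  Dh <= #|[set i : 'I_D | (s sigma).2 i \notin Byz]| ->
  delivers N R D Rh Dh Msg Byz s e sigma m.
Proof.
move=> Dh0 [L F] Hpcb sB Hc.
have I := Inv_all Dh0 L.
pose P i n := ((s sigma).2 i, x0) \in got (procs (state_at e n) sigma).
have monoP : forall i n n', n <= n' -> P i n -> P i n'.
  by move=> i n n' nn'; case: (state_le e sigma nn') => _ _ + _; apply.
have Hi : forall i, (s sigma).2 i \notin Byz -> exists n, P i n.
  move=> i qB; set q := (s sigma).2 i.
  have k0 : (sigma, q, None) \in pending (state_at e 0).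
    apply/flattenP; exists (send_to N Msg Byz sigma
      ([seq (s sigma).1 j | j <- enum 'I_R] ++ [seq (s sigma).2 j | j <- enum 'I_D]) None).
      by apply: map_f; rewrite mem_filter sB mem_enum.
    apply/mapP; exists q => //; rewrite mem_filter qB mem_cat; apply/orP; right.
    by apply: map_f; rewrite mem_enum.
  have [n1 _ e1] := F 0 _ k0.
  have s1 : sigma \in subs (procs (state_at e n1.+1) q).
    by rewrite /= e1 /= updE eqxx; apply: recv_subs.
  have [n2 e2] := Hpcb q qB.
  have r2 : x0 \in readyfor (procs (state_at e n2.+1) q).
    rewrite /= e2 /= updE eqxx.
    have [_ _ _ h _] := pcb_shape q x0 (procs (state_at e n2) q); apply: h; by rewrite /valid_pair eqxx.
  set n3 := maxn n1.+1 n2.+1.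
  have s3 : sigma \in subs (procs (state_at e n3) q).
    by case: (state_le e q (leq_maxl n1.+1 n2.+1)) => + _ _ _; apply.
  have r3 : x0 \in readyfor (procs (state_at e n3) q).
    by case: (state_le e q (leq_maxr n1.+1 n2.+1)) => _ + _ _; apply.
  have [_ _ _ _ IE] := I n3.
  case: (IE q sigma x0 qB sB r3 s3) => [kp|kg]; last by exists n3.
  have [n4 _ e4] := F n3 _ kp.
  exists n4.+1; rewrite /P /= e4 /= updE eqxx; apply: recv_got.
  by rewrite /valid_pair eqxx.
have Hi' : forall i, i \in enum [set i : 'I_D | (s sigma).2 i \notin Byz] -> exists n, P i n.
  by move=> i; rewrite mem_enum inE; apply: Hi.
have [n Hn] := exists_common monoP Hi'.
have [_ _ IC ID _] := I n.
have : Dh <= countD sigma (procs (state_at e n) sigma) x0.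
  apply: (leq_trans Hc); apply: subset_leq_card; apply/fintype.subsetP => i.
  by rewrite !inE => iB; apply: Hn; rewrite mem_enum inE.
move/ID; case E: (dlv _) => [z|] // _.
by exists n; rewrite E (IC _ _ E).
Qed.

End Proto.



Lemma prod_bool (I : finType) (P : I -> bool) : (\prod_i (P i : nat))%N = [forall i, P i].
Proof.
case: (boolP [forall i, P i]) => [/forallP h|/forallPn [i hi]].
  by rewrite big1 // => i _; rewrite h.
by rewrite (bigD1 i) //= (negbTE hi) mul0n.
Qed.

Lemma card_set_sum (T : finType) (P : pred T) : #|[set x | P x]| = (\sum_x (P x : nat))%N.
Proof. by rewrite -sum1_card big_mkcond /=; apply: eq_bigr => x _; rewrite inE. Qed.

Lemma count_pre (N D : nat) (B : {set 'I_N}) (S : {set 'I_D}) :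
  #|[set b : {ffun 'I_D -> 'I_N} | [set i | b i \in B] == S]| =
  (#|B| ^ #|S| * (N - #|B|) ^ (D - #|S|))%N.
Proof.
have E : (\prod_(i : 'I_D) \sum_(j : 'I_N) (((j \in B) == (i \in S)) : nat) =
   \sum_(b : {ffun 'I_D -> 'I_N}) \prod_i (((b i \in B) == (i \in S)) : nat))%N.
  exact: (bigA_distr_bigA (fun (i : 'I_D) (j : 'I_N) => (((j \in B) == (i \in S)) : nat))).
rewrite card_set_sum.
transitivity (\sum_(b : {ffun 'I_D -> 'I_N}) \prod_i (((b i \in B) == (i \in S)) : nat))%N.
  apply: eq_bigr => b _; rewrite prod_bool; congr (nat_of_bool _).
  apply/eqP/forallP => [<- i|h]; first by rewrite inE.
  by apply/setP => i; rewrite inE; apply/eqP.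
rewrite -E.
have cnt : forall A : {set 'I_N}, (\sum_j ((j \in A) : nat))%N = #|A|.
  by move=> A; rewrite -sum1_card [RHS]big_mkcond.
transitivity (\prod_(i : 'I_D) (if i \in S then #|B| else N - #|B|))%N.
  apply: eq_bigr => i _; case: (i \in S).
    by rewrite -cnt; apply: eq_bigr => j _; rewrite eqb_id.
  have hB : #|~: B| = (N - #|B|)%N by rewrite cardsCs finset.setCK card_ord.
  rewrite -hB -cnt; apply: eq_bigr => j _.
  by rewrite inE eqbF_neg.
rewrite (bigID (mem S)) /=.
rewrite (eq_bigr (fun _ => #|B|)); last by move=> i ->.
rewrite [X in (_ * X)%N](eq_bigr (fun _ => N - #|B|)); last by move=> i /negbTE ->.
rewrite !prod_nat_const; congr (_ * _ ^ _)%N.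
have hS : #|~: S| = (D - #|S|)%N by rewrite cardsCs finset.setCK card_ord.
by rewrite -hS; apply: eq_card => i; rewrite !inE.
Qed.

Local Open Scope ring_scope.

Lemma alg_part (R : realType) (N D Dh : nat) (w f : R) : (Dh <= D)%N -> f * N%:R = w ->
  \sum_(k < D.+1) ((k < D - Dh + 1)%N%:R * ('C(D, k)%:R * w ^+ k * (N%:R - w) ^+ (D - k)))
  = N%:R ^+ D * (1 - eps_o R f D Dh).
Proof.
move=> hD wE.
pose T k := 'C(D, k)%:R * w ^+ k * (N%:R - w) ^+ (D - k) : R.
have hcut : (D - Dh + 1 <= D.+1)%N by rewrite addn1 ltnS leq_subr.
have eps : N%:R ^+ D * eps_o R f D Dh = \sum_(D - Dh + 1 <= k < D.+1) T k.
  rewrite /eps_o mulr_sumr; apply: eq_big_nat => k /andP[_ kD].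
  rewrite /T -wE.
  have -> : N%:R - f * N%:R = (1 - f) * N%:R :> R by ring.
  rewrite !exprMn -{1}(subnKC (_ : (k <= D)%N)) ?exprD; last by rewrite -ltnS.
  ring.
have tot : N%:R ^+ D = \sum_(k < D.+1) T k.
  have -> : N%:R = (N%:R - w) + w :> R by ring.
  rewrite exprDn; apply: eq_bigr => k _; rewrite /T.
  by rewrite -mulr_natl; ring.
rewrite mulrBr mulr1 eps tot -(big_mkord xpredT T) (big_cat_nat (leq0n _) hcut).
rewrite -(big_mkord xpredT (fun k => (k < D - Dh + 1)%:R * T k)) (big_cat_nat (leq0n _) hcut) /=.
rewrite [X in _ + X](_ : _ = 0); last first.
  rewrite big1_seq // => k /andP[_]; rewrite mem_index_iota => /andP[hk _].
  by rewrite ltnNge hk /= mul0r.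
rewrite addr0 addrK; apply: eq_big_seq => k; rewrite mem_index_iota => /andP[_ ->].
by rewrite mul1r.
Qed.


Lemma key_count (R : realType) (N D Dh : nat) (B : {set 'I_N}) (f : R) :
  (Dh <= D)%N -> f * N%:R = #|B|%:R ->
  \sum_(b : {ffun 'I_D -> 'I_N}) ((Dh <= #|[set i | b i \notin B]|)%N)%:R
  = N%:R ^+ D * (1 - eps_o R f D Dh).
Proof.
move=> hD hf; rewrite -(alg_part hD hf).
pose H k := ((k < D - Dh + 1)%N)%:R : R.
pose pre (b : {ffun 'I_D -> 'I_N}) := [set i | b i \in B].
transitivity (\sum_(b : {ffun 'I_D -> 'I_N}) H #|pre b|).
  apply: eq_bigr => b _; rewrite /H /pre.
  have -> : [set i | b i \notin B] = ~: [set i | b i \in B] by apply/setP => i; rewrite !inE.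
  have := cardsC [set i | b i \in B]; rewrite card_ord.
  move: (#|~: _|) (#|[set i | b i \in B]|) => a c ac.
  congr (_%:R); congr (nat_of_bool _); apply/idP/idP; lia.
rewrite (partition_big (P := xpredT) pre xpredT) //=.
transitivity (\sum_(S : {set 'I_D}) H #|S| * (#|B| ^ #|S| * (N - #|B|) ^ (D - #|S|))%N%:R).
  apply: eq_bigr => S _.
  rewrite (eq_bigr (fun _ => H #|S|)); last by move=> b /eqP ->.
  rewrite -count_pre card_set_sum natr_sum mulr_sumr big_mkcond /=.
  by apply: eq_bigr => b _; rewrite /pre; case: (_ == S); rewrite ?mulr1 ?mulr0.
have cl : forall S : {set 'I_D}, (#|S| < D.+1)%N.
  by move=> S; rewrite ltnS; apply: leq_trans (max_card _) _; rewrite card_ord.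
have nbN : (#|B| <= N)%N by apply: leq_trans (max_card _) _; rewrite card_ord.
pose G k := H k * (#|B| ^ k * (N - #|B|) ^ (D - k))%N%:R.
rewrite (partition_big (P := xpredT) (fun S : {set 'I_D} => Ordinal (cl S)) xpredT) //=.
apply: eq_bigr => k _.
transitivity (\sum_(S : {set 'I_D}) ((#|S| == k) : nat)%:R * G k).
  rewrite big_mkcond; apply: eq_bigr => S _ /=.
  case: eqP => [E|NE]; first by rewrite -E /= eqxx mul1r.
  have -> : (#|S| == k) = false by apply/eqP => h; apply: NE; apply: val_inj.
  by rewrite mul0r.
rewrite -big_distrl /= -natr_sum -card_set_sum card_draws card_ord /G /H.
rewrite natrM !natrX natrB //.
ring.
Qed.

Lemma sum_samples (R : realType) N Rn D (sigma : 'I_N) (g : {ffun 'I_D -> 'I_N} -> R) :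
  \sum_(t : samples_t N Rn D) g (t sigma).2 =
  #|{ffun 'I_Rn -> 'I_N}|%:R * (\sum_b g b) *
  \prod_(i : 'I_N | i != sigma) ((#|{ffun 'I_Rn -> 'I_N}| * #|{ffun 'I_D -> 'I_N}|)%N%:R : R).
Proof.
pose U := ({ffun 'I_Rn -> 'I_N} * {ffun 'I_D -> 'I_N})%type.
pose F (i : 'I_N) (u : U) := if i == sigma then g u.2 else 1.
have E : \prod_(i : 'I_N) \sum_(u : U) F i u = \sum_(t : {ffun 'I_N -> U}) \prod_i F i (t i).
  exact: (bigA_distr_bigA F).
have E2 : \sum_(t : samples_t N Rn D) g (t sigma).2 = \sum_(t : {ffun 'I_N -> U}) \prod_i F i (t i).
  apply: eq_bigr => t _; rewrite (bigD1 sigma) //= /F eqxx big1 ?mulr1 //.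
  by move=> i /negbTE ->.
rewrite E2 -E (bigD1 sigma) //= /F eqxx.
congr (_ * _).
  rewrite -(pair_big xpredT xpredT (fun _ b => g b)) /= sumr_const card_ffun.
  by rewrite mulr_natl.
apply: eq_bigr => i /negbTE ->.
by rewrite sumr_const card_prod.
Qed.

Lemma good_frac (R : realType) N Rn D Dh (Byz : {set 'I_N}) (sigma : 'I_N) (f : R) :
  (Dh <= D)%N -> f * N%:R = #|Byz|%:R ->
  \sum_(t : samples_t N Rn D) ((Dh <= #|[set i | (t sigma).2 i \notin Byz]|)%N)%:R
  = #|samples_t N Rn D|%:R * (1 - eps_o R f D Dh).
Proof.
move=> hD hf.
rewrite (sum_samples Rn sigma (fun b => ((Dh <= #|[set i | b i \notin Byz]|)%N)%:R)) (key_count hD hf).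
have c1 : forall T : finType, (\sum_(t : T) 1 : R) = #|T|%:R.
  by move=> T; rewrite (eq_bigr (fun _ => (1%N)%:R)) // -natr_sum sum1dep_card cardsT.
have := @sum_samples R N Rn D sigma (fun _ => 1).
rewrite !c1 => ->.
have cD : (#|{ffun 'I_D -> 'I_N}|%:R : R) = N%:R ^+ D by rewrite card_ffun !card_ord natrX.
rewrite cD; ring.
Qed.

Local Open Scope classical_set_scope.
Local Open Scope ring_scope.

Theorem theorem12 (Rr : realType) (d : measure_display) (Omega : measurableType d)
  (P : probability Omega Rr)
  (N R D Rh Dh : nat) (Msg : eqType) (Byz : {set 'I_N}) (sigma : 'I_N) (m : Msg)
  (f eps_pcb : Rr)
  (run : samples_t N R D -> Omega -> nat -> cevent N Msg) :
  (0 < Dh <= D)%N ->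
  f * N%:R = #|Byz|%:R ->
  sigma \notin Byz ->
  (forall s w, admissible N R D Rh Dh Msg Byz m s (run s w)) ->
  (forall s, measurable [set w | pcb_all N Msg Byz m (run s w)] /\
             ((1 - eps_pcb)%:E <= P [set w | pcb_all N Msg Byz m (run s w)])%E) ->
  (forall s, measurable [set w | delivers N R D Rh Dh Msg Byz s (run s w) sigma m]) ->
  ((1 - (eps_pcb + (1 - eps_pcb) * eps_o Rr f D Dh))%:E
     <= joint_prob Rr d Omega P (samples_t N R D) (fun s => [set w | delivers N R D Rh Dh Msg Byz s (run s w) sigma m]))%E.
Proof.
move=> /andP[Dh0 hD] hf sB Hadm Hpcb Hmeas.
have HT : (0 < #|samples_t N R D|)%N.
  by apply/card_gt0P; exists [ffun _ => ([ffun _ => sigma], [ffun _ => sigma])].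
have HT' : (0 : Rr) < #|samples_t N R D|%:R by rewrite ltr0n.
have GF := @good_frac Rr N R D Dh Byz sigma f hD hf.
have Hle : forall t : samples_t N R D,
    (Dh <= #|[set i | (t sigma).2 i \notin Byz]%SET|)%N ->
    ((1 - eps_pcb)%:E <= P [set w | delivers N R D Rh Dh Msg Byz t (run t w) sigma m])%E.
  move=> t gt; have [m1 h1] := Hpcb t; apply: le_trans h1 _.
  apply: le_measure; rewrite ?inE //.
  move=> w hw; exact: (main_det Dh0 (Hadm t w) hw sB gt).
have eo1 : 0 <= 1 - eps_o Rr f D Dh.
  have : 0 <= \sum_(t : samples_t N R D)
      ((Dh <= #|[set i | (t sigma).2 i \notin Byz]%SET|)%N)%:R :> Rr.
    by apply: sumr_ge0 => t _; rewrite ler0n.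
  by rewrite GF pmulr_rge0.
rewrite /joint_prob.
case: (leP 0 (1 - eps_pcb)) => he.
  apply: (@le_trans _ _ (((#|samples_t N R D|%:R : Rr)^-1)%:E *
     \sum_(t : samples_t N R D) ((1 - eps_pcb) *
        ((Dh <= #|[set i | (t sigma).2 i \notin Byz]%SET|)%N)%:R)%:E)%E); last first.
    apply: lee_wpmul2l; first by rewrite lee_fin invr_ge0 ler0n.
    apply: lee_sum => t _.
    case gt: (Dh <= _)%N; first by rewrite mulr1; exact: Hle.
    by rewrite mulr0; exact: measure_ge0.
  rewrite sumEFin -EFinM lee_fin -mulr_sumr GF.
  have -> : (#|samples_t N R D|%:R : Rr)^-1 * ((1 - eps_pcb) *
     (#|samples_t N R D|%:R * (1 - eps_o Rr f D Dh))) =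
     (1 - eps_pcb) * (1 - eps_o Rr f D Dh).
    by field; rewrite gt_eqF.
  by rewrite le_eqVlt; apply/orP; left; apply/eqP; ring.
apply: (@le_trans _ _ 0%E).
  rewrite lee_fin.
  have -> : 1 - (eps_pcb + (1 - eps_pcb) * eps_o Rr f D Dh) =
     (1 - eps_pcb) * (1 - eps_o Rr f D Dh) by ring.
  by rewrite mulr_le0_ge0 // ltW.
apply: mule_ge0; first by rewrite lee_fin invr_ge0 ler0n.
by apply: sume_ge0 => t _; exact: measure_ge0.
Qed.
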